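(* Let $\mathcal{H}=(V,H,\bm{w})$ be a finite, connected, weighted undirected hypergraph in which every hyperedge has at least two vertices. (i) For any distinct $u,v\in V$ with $\kappa(u,v)>0$, $$d(u,v)\le\frac{2\max_{h\in H}w_h}{\kappa(u,v)}.$$ (ii) If there is $\kappa>0$ with $\kappa(u,v)\ge\kappa$ for every well-transported pair $\{u,v\}$, then $$\mathrm{diam}(\mathcal{H})\le\frac{2\max_{h\in H}w_h}{\kappa}.$$
   Context: A weighted undirected hypergraph $\mathcal{H}=(V,H,\bm{w})$ has a finite vertex set $V$, a finite set $H$ of hyperedges (subsets of $V$), and positive weights $w_h>0$. Distinct vertices $u,v$ are adjacent ($u\sim v$) if some hyperedge contains both; $\Gamma(x)=\{z: z\sim x\}$; $\mathrm{Deg}(x)=\sum_{h\ni x}w_h$. A hyperpath connecting $u$ and $v$ is a sequence of hyperedges $h_1,\dots,h_l$ with $u\in h_1$, $v\in h_l$, $h_j\cap h_{j+1}\neq\emptyset$; $\mathcal{H}$ is connected if all pairs of distinct vertices are connected by hyperpaths. For $u\ne v$, $d(u,v)=\inf_\gamma\sum_{h\in\gamma}w_h$ over hyperpaths connecting $u,v$; $d(u,u)=0$; $\mathrm{diam}(\mathcal{H})=\max_{u,v}d(u,v)$. $W(\mu,\nu)=\inf_\pi\sum_{x,y}\pi(x,y)d(x,y)$ over couplings $\pi$ of probability measures $\mu,\nu$ on $V$. For $\alpha\in[0,1]$: $\mu_x^\alpha(x)=\alpha$, $\mu_x^\alpha(z)=(1-\alpha)\sum_{h'\ni x,z}\frac{1}{|h'|-1}\frac{w_{h'}}{\mathrm{Deg}(x)}$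 for $z\in\Gamma(x)$, $0$ otherwise. For distinct $u,v$: $\kappa_\alpha(u,v)=1-W(\mu_u^\alpha,\mu_v^\alpha)/d(u,v)$, and the Lin–Lu–Yau curvature is $\kappa(u,v)=\lim_{\alpha\to1^-}\kappa_\alpha(u,v)/(1-\alpha)$ (this limit exists in $\mathbb{R}$). A pair $\{u,v\}$ of distinct vertices is well-transported if there is a hyperedge $h$ containing both with $d(u,v)=w_h$. *)

(* Defs.v *)
From HB Require Import structures.
From mathcomp Require Import all_boot all_order all_algebra.
From mathcomp Require Import all_classical all_reals all_analysis.
Set Implicit Arguments. Unset Strict Implicit. Unset Printing Implicit Defensive.
Import Order.TTheory GRing.Theory Num.Theory.
Import numFieldNormedType.Exports.

Local Open Scope ring_scope.

Section Hypergraph.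
Variables (R : realType) (V : finType) (H : {set {set V}}) (w : {set V} -> R).

Definition adj (u v : V) : bool :=
  (u != v) && [exists h in H, (u \in h) && (v \in h)].

Definition Deg (x : V) : R := \sum_(h in H | x \in h) w h.

Definition hyperpath (u v : V) (p : seq {set V}) : bool :=
  [&& p != [::], all (fun h => h \in H) p, u \in head (finset.set0 : {set V}) p,
      v \in last (finset.set0 : {set V}) p &
      path (fun a b : {set V} => [exists z, (z \in a) && (z \in b)])
           (head (finset.set0 : {set V}) p) (behead p)].

Definition hconnected : Prop :=
  forall u v : V, u != v -> exists p, hyperpath u v p.

Definition hdist (u v : V) : R :=
  if u == v then 0
  else inf ([set x : R | exists p, hyperpath u v p /\ x = \sum_(h <- p) w h])%classic.

Definition hdiam : R := \big[Num.max/0]_(u : V) \big[Num.max/0]_(v : V) hdist u v.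

Definition maxw : R := \big[Num.max/0]_(h in H) w h.

Definition coupling (mu nu : V -> R) (pi : V -> V -> R) : Prop :=
  (forall x y, 0 <= pi x y) /\
  (forall x, \sum_(y : V) pi x y = mu x) /\
  (forall y, \sum_(x : V) pi x y = nu y).

Definition W1 (mu nu : V -> R) : R :=
  inf ([set c : R | exists pi, coupling mu nu pi /\
                   c = \sum_(x : V) \sum_(y : V) pi x y * hdist x y])%classic.

Definition mu_walk (alpha : R) (x z : V) : R :=
  if z == x then alpha
  else if adj x z then
    (1 - alpha) * \sum_(h in H | (x \in h) && (z \in h))
                    ((#|h|.-1)%:R)^-1 * (w h / Deg x)
  else 0.

Definition kappa_alpha (alpha : R) (u v : V) : R :=
  1 - W1 (mu_walk alpha u) (mu_walk alpha v) / hdist u v.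

Definition LLY_curvature (u v : V) : R :=
  lim ((fun alpha : R => kappa_alpha alpha u v / (1 - alpha)) @ at_left (1 : R))%classic.

Definition well_transported (u v : V) : Prop :=
  u != v /\ exists2 h, h \in H & [/\ u \in h, v \in h & hdist u v = w h].

End Hypergraph.

(* Main.v *)
Require Import Defs.
From HB Require Import structures.
From mathcomp Require Import all_boot all_order all_algebra.
From mathcomp Require Import all_classical all_reals all_analysis.
From mathcomp Require Import ring lra.
Import Order.TTheory GRing.Theory Num.Theory.
Import numFieldNormedType.Exports.
Local Open Scope ring_scope.
Set Implicit Arguments. Unset Strict Implicit. Unset Printing Implicit Defensive.

Section Proofs.
Variables (R : realType) (V : finType) (H : {set {set V}}) (w : {set V} -> R).
Hypothesis w_pos : forall h, h \in H -> 0 < w h.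
Hypothesis H_size : forall h, h \in H -> (2 <= #|h|)%N.
Hypothesis H_conn : hconnected H.

Local Notation d := (hdist H w).
Local Notation Sp u v :=
  ([set x : R | exists p, hyperpath H u v p /\ x = \sum_(h <- p) w h])%classic.

Lemma sum_ge0 (p : seq {set V}) : all (fun h => h \in H) p -> 0 <= \sum_(h <- p) w h.
Proof. move=> /allP Hp; rewrite big_seq; apply: sumr_ge0 => h /Hp/w_pos/ltW //. Qed.

Lemma Sp_lb u v : lbound (Sp u v) 0.
Proof. by move=> x [p [/and5P[_ Hall _ _ _] ->]]; exact: sum_ge0. Qed.

Lemma Sp_ne u v : u != v -> (Sp u v !=set0)%classic.
Proof. by move=> uv; have [p hp] := H_conn uv; exists (\sum_(h <- p) w h), p. Qed.

Lemma hdist_xx u : d u u = 0.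
Proof. by rewrite /hdist eqxx. Qed.

Lemma hdist_ge0 u v : 0 <= d u v.
Proof.
rewrite /hdist; case: ifP => // /negbT uv.
apply: lb_le_inf; [exact: Sp_ne | exact: Sp_lb].
Qed.

Lemma hdist_le_path u v p : u != v -> hyperpath H u v p -> d u v <= \sum_(h <- p) w h.
Proof.
move=> uv hp; rewrite /hdist (negbTE uv); apply: ge_inf; last by exists p.
by exists 0; exact: Sp_lb.
Qed.

Lemma hdist_edge h u v : h \in H -> u \in h -> v \in h -> d u v <= w h.
Proof.
move=> hH uh vh; case: (eqVneq u v) => [->|uv]; first by rewrite hdist_xx ltW ?w_pos.
have := @hdist_le_path u v [:: h] uv; rewrite big_seq1; apply.
by rewrite /hyperpath /= hH uh vh.
Qed.

Lemma hyperpath_cat u y z p q :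
  hyperpath H u y p -> hyperpath H y z q -> hyperpath H u z (p ++ q).
Proof.
case: p => [|a p]; first by rewrite /hyperpath eqxx.
case: q => [|b q]; first by move=> _ /and5P[].
move=> /and5P[_ /= /andP[aH pH] ua yl pp] /and5P[_ /= /andP[bH qH] yb zl qp].
apply/and5P; split => //=.
- by rewrite aH all_cat pH /= bH qH.
- by rewrite last_cat.
- rewrite cat_path pp /= qp andbT; apply/existsP; exists y; by rewrite yl yb.
Qed.

Lemma inf_helper (C : set R) (t K X : R) : (C !=set0)%classic -> has_lbound C -> 0 <= t ->
  (forall c, C c -> X <= t * c + K) -> X <= t * inf C + K.
Proof.
move=> [c0 Cc0] hl t0 hX.
case: (eqVneq t 0) => [tz|tn0].
  by move: (hX _ Cc0); rewrite tz !mul0r !add0r.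
have tp : 0 < t by rewrite lt0r tn0 t0.
have : (X - K) / t <= inf C.
  apply: lb_le_inf; first by exists c0.
  move=> c Cc; rewrite ler_pdivrMr // mulrC; have := hX _ Cc; lra.
rewrite ler_pdivrMr // mulrC; lra.
Qed.

Lemma hdist_tri u y z : d u z <= d u y + d y z.
Proof.
case: (eqVneq u z) => [->|uz]; first by rewrite hdist_xx addr_ge0 ?hdist_ge0.
case: (eqVneq u y) => [->|uy]; first by rewrite hdist_xx add0r.
case: (eqVneq y z) => [->|yz]; first by rewrite hdist_xx addr0.
rewrite [hdist _ _ u y]/hdist (negbTE uy) [hdist _ _ y z]/hdist (negbTE yz).
rewrite -[inf (Sp u y)]mul1r; apply: inf_helper => //; first exact: Sp_ne.
  by exists 0; exact: Sp_lb.
move=> c [p [hp ->]]; rewrite mul1r addrC -[inf (Sp y z)]mul1r.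
apply: inf_helper => //; first exact: Sp_ne.
  by exists 0; exact: Sp_lb.
move=> c' [q [hq ->]]; rewrite mul1r addrC -big_cat.
apply: hdist_le_path => //; exact: hyperpath_cat hp hq.
Qed.

Definition cand u (xh : V * {set V}) :=
  [&& xh.2 \in H, u \in xh.2, xh.1 \in xh.2 & u != xh.1].

Lemma path_cand u v p : u != v -> hyperpath H u v p ->
  exists2 xh, cand u xh & w xh.2 + d xh.1 v <= \sum_(h <- p) w h.
Proof.
move=> uv; elim: p => [|a p IH]; first by rewrite /hyperpath eqxx.
move=> /and5P[_ /= /andP[aH pH] ua vl pp].
case vA : (v \in a).
  exists (v, a); first by rewrite /cand /= aH ua vA uv.
  by rewrite /= big_cons hdist_xx addr0 lerDl; exact: sum_ge0.
case: p IH pH vl pp => [|b p'] IH pH vl pp; first by rewrite /= vA in vl.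
move/andP: pp => [/existsP[y /andP[ya yb]] pp].
have hbp : hyperpath H y v (b :: p') by apply/and5P; split.
case: (eqVneq y u) => [yu|yu].
  subst y; have [xh cxh le] := IH hbp.
  exists xh => //; rewrite big_cons; apply: (le_trans le); have := w_pos aH; lra.
exists (y, a); first by rewrite /cand /= aH ua ya eq_sym yu.
rewrite /= big_cons lerD2l; apply: hdist_le_path => //.
by apply: contraFneq vA => <-.
Qed.

Lemma decomp u v : u != v -> exists x h,
  [/\ h \in H, u \in h, x \in h, u != x & d u x = w h /\ d u v = d u x + d x v].
Proof.
move=> uv; have [p hp] := H_conn uv.
have [xh0 c0 _] := path_cand uv hp.
pose F xh := w xh.2 + d xh.1 v.
case: (arg_minP F c0) => [[x h]] /and4P[/= hH uh xh ux] minF.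
have le1 : F (x, h) <= d u v.
  rewrite [hdist _ _ u v]/hdist (negbTE uv); apply: lb_le_inf; first exact: Sp_ne.
  move=> c [q [hq ->]]; have [xh' c' le'] := path_cand uv hq.
  exact: le_trans (minF _ c') le'.
have dux := hdist_edge hH uh xh.
have tri := hdist_tri u x v.
rewrite /F /= in le1.
exists x, h; split => //; split; apply/eqP; rewrite eq_le; apply/andP; split; lra.
Qed.

Lemma hdist_gt0 u v : u != v -> 0 < d u v.
Proof.
move=> uv; have [x [h [hH uh xh ux [dux ->]]]] := decomp uv.
by rewrite dux; apply: ltr_pwDl (w_pos hH) (hdist_ge0 _ _) .
Qed.

Definition inG x := exists2 h, h \in H & x \in h.

Lemma inG_l u v : u != v -> inG u.
Proof. by move=> uv; have [x [h [hH uh _ _ _]]] := decomp uv; exists h. Qed.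

Local Notation mu := (mu_walk H w).

Lemma Deg_ge0 x : 0 <= Deg H w x.
Proof. by apply: sumr_ge0 => h /andP[hH _]; exact: ltW (w_pos hH). Qed.

Lemma mu_ge0 a x z : 0 <= a <= 1 -> 0 <= mu a x z.
Proof.
move=> /andP[a0 a1]; rewrite /mu_walk; case: ifP => // _; case: ifP => // _.
apply: mulr_ge0; first by rewrite subr_ge0.
apply: sumr_ge0 => h /andP[hH _]; apply: mulr_ge0; first by rewrite invr_ge0.
by apply: divr_ge0; [exact: ltW (w_pos hH) | exact: Deg_ge0].
Qed.

Lemma mu_affine t a b x z :
  mu (t * a + (1 - t) * b) x z = t * mu a x z + (1 - t) * mu b x z.
Proof.
rewrite /mu_walk; case: ifP => _; first by [].
case: ifP => _; first by ring.
by rewrite !mulr0 addr0.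
Qed.

Lemma mu_one x z : mu 1 x z = (z == x)%:R.
Proof.
rewrite /mu_walk; case: ifP => _; first by [].
by case: ifP => _ //; rewrite subrr mul0r.
Qed.

Lemma mass a x : inG x -> \sum_z mu a x z = 1.
Proof.
move=> [h0 h0H xh0].
have Dpos : 0 < Deg H w x.
  rewrite /Deg (bigD1 h0) /=; last by rewrite h0H xh0.
  apply: ltr_pwDl (w_pos h0H) _; apply: sumr_ge0 => h /andP[/andP[hH _] _].
  exact: ltW (w_pos hH).
rewrite (bigD1 x) //= /mu_walk eqxx.
rewrite (eq_bigr (fun z => (1 - a) * \sum_(h in H | (x \in h) && (z \in h))
                    ((#|h|.-1)%:R)^-1 * (w h / Deg H w x))); last first.
  move=> z zx; rewrite (negbTE zx); case: ifP => // nadj.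
  rewrite big1 ?mulr0 // => h /andP[hH /andP[xh zh]].
  move: nadj; rewrite /adj eq_sym zx /=.
  by have -> : [exists h0, (h0 \in H) && ((x \in h0) && (z \in h0))] by apply/existsP; exists h; rewrite hH xh zh.
rewrite -mulr_sumr.
rewrite (exchange_big_dep (fun h => (h \in H) && (x \in h))) /=; last first.
  by move=> z h _ /andP[-> /andP[-> _]].
rewrite (eq_bigr (fun h => w h / Deg H w x)); last first.
  move=> h /andP[hH xh].
  rewrite sumr_const.
  have -> : #|[pred z | (z != x) && ((h \in H) && ((x \in h) && (z \in h)))]| = #|h|.-1.
    rewrite (cardsD1 x h) xh add1n /=.
    by apply: eq_card => z; rewrite !inE hH /=.
  have n0 : (#|h|.-1)%:R != 0 :> R.
    by rewrite pnatr_eq0; move: (H_size hH); case: #|h| => [|[|n]].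
  by rewrite -[X in X = _]mulr_natl mulrA mulfV // mul1r.
by rewrite -mulr_suml -/(Deg H w x) mulfV ?gt_eqF // mulr1 addrC subrK.
Qed.

Local Notation cost pi := (\sum_(x : V) \sum_(y : V) pi x y * d x y).
Local Notation Cs mu nu :=
  ([set c : R | exists pi, coupling mu nu pi /\ c = cost pi])%classic.

Lemma Cs_lb (m n : V -> R) : lbound (Cs m n) 0.
Proof.
move=> c [pi [[p0 _] ->]]; apply: sumr_ge0 => x _; apply: sumr_ge0 => y _.
exact: mulr_ge0 (p0 x y) (hdist_ge0 x y).
Qed.

Lemma Cs_hlb (m n : V -> R) : has_lbound (Cs m n).
Proof. by exists 0; exact: Cs_lb. Qed.

Lemma W1_le (m n : V -> R) pi : coupling m n pi -> W1 H w m n <= cost pi.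
Proof. by move=> cp; apply: ge_inf; [exact: Cs_hlb | exists pi]. Qed.

Lemma W1_ge (m n : V -> R) b : (exists pi, coupling m n pi) ->
  (forall pi, coupling m n pi -> b <= cost pi) -> b <= W1 H w m n.
Proof.
move=> [pi cp] hb; apply: lb_le_inf; first by exists (cost pi), pi.
by move=> c [pi' [cp' ->]]; exact: hb.
Qed.

Lemma prod_coupling (m n : V -> R) : (forall x, 0 <= m x) -> (forall x, 0 <= n x) ->
  \sum_x m x = 1 -> \sum_x n x = 1 -> coupling m n (fun x y => m x * n y).
Proof.
move=> m0 n0 sm sn; split; first by move=> x y; exact: mulr_ge0.
split; first by move=> x; rewrite -mulr_sumr sn mulr1.
by move=> y; rewrite -mulr_suml sm mul1r.
Qed.

Lemma W1_tri (m n r : V -> R) : (exists pi, coupling m n pi) -> (exists pi, coupling n r pi) ->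
  W1 H w m r <= W1 H w m n + W1 H w n r.
Proof.
move=> [pa ca] [pb cb].
have key : forall p1 p2, coupling m n p1 -> coupling n r p2 ->
    W1 H w m r <= cost p1 + cost p2.
  move=> p1 p2 [p10 [p1r p1c]] [p20 [p2r p2c]].
  have n0 y : 0 <= n y by rewrite -p1c; apply: sumr_ge0 => x _.
  have z1 x y : n y = 0 -> p1 x y = 0.
    move=> ny; apply: (psumr_eq0P (P := predT) (F := fun x => p1 x y)) => //.
    by rewrite p1c.
  have z2 y z : n y = 0 -> p2 y z = 0.
    move=> ny; apply: (psumr_eq0P (P := predT) (F := fun z => p2 y z)) => //.
    by rewrite p2r.
  pose g x y z := if n y == 0 then 0 else p1 x y * p2 y z / n y.
  have g0 x y z : 0 <= g x y z.
    rewrite /g; case: ifP => // _; apply: divr_ge0 => //; exact: mulr_ge0.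
  have rowg x y : \sum_z g x y z = p1 x y.
    rewrite /g; case: eqP => [ny|/eqP ny]; first by rewrite big1 // z1.
    by rewrite -mulr_suml -mulr_sumr p2r mulfK.
  have colg y z : \sum_x g x y z = p2 y z.
    rewrite /g; case: eqP => [ny|/eqP ny]; first by rewrite big1 // z2.
    by rewrite -mulr_suml -mulr_suml p1c mulrC mulrA mulVf ?mul1r.
  pose p x z := \sum_y g x y z.
  have cp : coupling m r p.
    split; first by move=> x z; apply: sumr_ge0 => y _.
    split.
      move=> x; rewrite /p exchange_big /=.
      by rewrite -p1r; apply: eq_bigr => y _; exact: rowg.
    move=> z; rewrite /p exchange_big /=.
    by rewrite -p2c; apply: eq_bigr => y _; exact: colg.
  apply: (le_trans (W1_le cp)).
  rewrite /p.
  apply: (@le_trans _ _ (\sum_x \sum_z \sum_y (g x y z * d x y + g x y z * d y z))).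
    apply: ler_sum => x _; apply: ler_sum => z _; rewrite mulr_suml.
    apply: ler_sum => y _; rewrite -mulrDr; apply: ler_wpM2l => //.
    exact: hdist_tri.
  rewrite (eq_bigr (fun x => \sum_z \sum_y g x y z * d x y + \sum_z \sum_y g x y z * d y z)); last first.
    by move=> x _; rewrite -big_split /=; apply: eq_bigr => z _; rewrite -big_split.
  rewrite big_split /=; apply: lerD; rewrite le_eqVlt; apply/orP; left; apply/eqP.
    apply: eq_bigr => x _; rewrite exchange_big /=; apply: eq_bigr => y _.
    by rewrite -mulr_suml rowg.
  rewrite exchange_big /=.
  rewrite (eq_bigr (fun z => \sum_y \sum_x g x y z * d y z)); last first.
    by move=> z _; rewrite exchange_big.
  rewrite exchange_big /=; apply: eq_bigr => y _; apply: eq_bigr => z _.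
  by rewrite -mulr_suml colg.
rewrite [W1 H w m n]/W1 -[inf _]mul1r; apply: inf_helper => //; first by exists (cost pa), pa.
  exact: Cs_hlb.
move=> c [p1 [cp1 ->]]; rewrite mul1r addrC [W1 H w n r]/W1 -[inf _]mul1r.
apply: inf_helper => //; first by exists (cost pb), pb.
  exact: Cs_hlb.
by move=> c' [p2 [cp2 ->]]; rewrite mul1r addrC; exact: key.
Qed.

Lemma le_maxw h : h \in H -> w h <= maxw H w.
Proof. by move=> hH; rewrite /maxw; exact: (le_bigmax_cond _ (fun h => w h) hH). Qed.

Lemma spread a x (f : V -> R) : 0 <= a <= 1 -> inG x -> f x = 0 ->
  (forall h z, h \in H -> x \in h -> z \in h -> f z <= w h) ->
  \sum_z mu a x z * f z <= (1 - a) * maxw H w.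
Proof.
move=> a01 gx fx hf.
apply: (@le_trans _ _ (\sum_z mu a x z * (if z == x then 0 else maxw H w))).
  apply: ler_sum => z _; case: eqP => [->|/eqP zx]; first by rewrite fx.
  case: (boolP (adj H x z)) => [/andP[_ /existsP[h /andP[hH /andP[xh zh]]]]|nadj].
    apply: ler_wpM2l; first exact: mu_ge0.
    exact: le_trans (hf _ _ hH xh zh) (le_maxw hH).
  by rewrite /mu_walk (negbTE zx) (negbTE nadj) !mul0r.
have := mass a gx; rewrite (bigD1 x) //= {1}/mu_walk eqxx => ms.
rewrite (bigD1 x) //= eqxx mulr0 add0r.
rewrite (eq_bigr (fun z => mu a x z * maxw H w)); last by move=> z /negbTE ->.
rewrite -mulr_suml.
have -> : \sum_(z | z != x) mu a x z = 1 - a by lra.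
by [].
Qed.

Lemma ex_coupling a u v : 0 <= a <= 1 -> inG u -> inG v ->
  exists pi, coupling (mu a u) (mu a v) pi.
Proof.
move=> a01 gu gv; eexists; apply: prod_coupling; try (by move=> x; exact: mu_ge0);
  exact: mass.
Qed.

Lemma W1_lower a u v : 0 <= a <= 1 -> inG u -> inG v ->
  d u v - 2 * ((1 - a) * maxw H w) <= W1 H w (mu a u) (mu a v).
Proof.
move=> a01 gu gv; apply: W1_ge; first exact: ex_coupling.
move=> pi [p0 [pr pc]].
have A : \sum_x mu a u x * d u x <= (1 - a) * maxw H w.
  apply: spread => //; first exact: hdist_xx.
  by move=> h z hH uh zh; exact: hdist_edge.
have B : \sum_y mu a v y * d y v <= (1 - a) * maxw H w.
  apply: spread => //; first exact: hdist_xx.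
  by move=> h z hH vh zh; exact: hdist_edge.
have C : \sum_x \sum_y (pi x y * d u v - pi x y * d u x - pi x y * d y v) <= cost pi.
  apply: ler_sum => x _; apply: ler_sum => y _.
  rewrite -!mulrBr; apply: ler_wpM2l => //.
  have := hdist_tri u x v; have := hdist_tri x y v; lra.
have e1 : \sum_x \sum_y pi x y * d u v = d u v.
  rewrite (eq_bigr (fun x => mu a u x * d u v)); last by move=> x _; rewrite -mulr_suml pr.
  by rewrite -mulr_suml mass // mul1r.
have e2 : \sum_x \sum_y pi x y * d u x = \sum_x mu a u x * d u x.
  by apply: eq_bigr => x _; rewrite -mulr_suml pr.
have e3 : \sum_x \sum_y pi x y * d y v = \sum_y mu a v y * d y v.
  by rewrite exchange_big; apply: eq_bigr => y _; rewrite -mulr_suml pc.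
move: C; rewrite (eq_bigr (fun x => \sum_y pi x y * d u v - \sum_y pi x y * d u x
   - \sum_y pi x y * d y v)); last by move=> x _; rewrite !sumrB.
rewrite !sumrB e1 e2 e3; lra.
Qed.

Lemma inG_r u v : u != v -> inG v.
Proof. by move=> uv; apply: (@inG_l v u); rewrite eq_sym. Qed.

Lemma kappa_le a u v : u != v -> 0 <= a < 1 ->
  kappa_alpha H w a u v / (1 - a) <= 2 * maxw H w / d u v.
Proof.
move=> uv /andP[a0 a1].
have Dp := hdist_gt0 uv.
have a01 : 0 <= a <= 1 by rewrite a0 ltW.
have Wl := W1_lower a01 (inG_l uv) (inG_r uv).
rewrite /kappa_alpha.
set W := W1 _ _ _ _ in Wl *; set D := d u v in Wl Dp *; set M := maxw H w in Wl *.
have ha : 0 < 1 - a by rewrite subr_gt0.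
have -> : (1 - W / D) / (1 - a) = (D - W) / (D * (1 - a)).
  by field; rewrite ?gt_eqF.
rewrite ler_pdivrMr ?mulr_gt0 //.
have -> : 2 * M / D * (D * (1 - a)) = 2 * ((1 - a) * M).
  by field; rewrite ?gt_eqF.
lra.
Qed.

Lemma sum_delta (F : V -> R) (c : V) : \sum_(y : V) (y == c)%:R * F y = F c.
Proof.
rewrite (bigD1 c) //= eqxx mul1r big1 ?addr0 // => y /negbTE ->.
by rewrite mul0r.
Qed.

Lemma sum_ind (c : V) : \sum_(y : V) (y == c)%:R = 1 :> R.
Proof.
rewrite (eq_bigr (fun y => (y == c)%:R * 1)); last by move=> y _; rewrite mulr1.
exact: sum_delta.
Qed.

Lemma W1_mono_aux a b u v : inG u -> inG v -> 0 <= a -> a <= b -> b < 1 ->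
  W1 H w (mu b u) (mu b v) <=
    (1 - b) / (1 - a) * W1 H w (mu a u) (mu a v) + (1 - (1 - b) / (1 - a)) * d u v.
Proof.
move=> gu gv a0 ab b1.
have a1 : a < 1 by exact: le_lt_trans ab b1.
have ha : 0 < 1 - a by rewrite subr_gt0.
set t : R := (1 - b) / (1 - a).
have t0 : 0 <= t by apply: divr_ge0; [rewrite subr_ge0 ltW | exact: ltW].
have t1 : 0 <= 1 - t.
  rewrite subr_ge0 /t ler_pdivrMr // mul1r; lra.
have hb : b = t * a + (1 - t) * 1 by rewrite /t; field; rewrite gt_eqF.
rewrite [W1 H w (mu a u) _]/W1; apply: inf_helper => //.
- have [pi cp] := @ex_coupling a u v (ltac:(by rewrite a0 ltW)) gu gv.
  by exists (cost pi), pi.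
- exact: Cs_hlb.
move=> c [p1 [[p10 [p1r p1c]] ->]].
pose p x y := t * p1 x y + (1 - t) * ((x == u)%:R * (y == v)%:R).
have cp : coupling (mu b u) (mu b v) p.
  split.
    move=> x y; apply: addr_ge0; first exact: mulr_ge0.
    by apply: mulr_ge0 => //; apply: mulr_ge0.
  split.
    move=> x; rewrite big_split /=.
    have -> : \sum_(y : V) t * p1 x y = t * mu a u x by rewrite -p1r mulr_sumr.
    have -> : \sum_(y : V) (1 - t) * ((x == u)%:R * (y == v)%:R) = (1 - t) * (x == u)%:R.
      by rewrite -!mulr_sumr sum_ind mulr1.
    by rewrite hb mu_affine mu_one.
  move=> y; rewrite big_split /=.
  have -> : \sum_(x : V) t * p1 x y = t * mu a v y by rewrite -p1c mulr_sumr.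
  have -> : \sum_(x : V) (1 - t) * ((x == u)%:R * (y == v)%:R) = (1 - t) * (y == v)%:R.
    by rewrite -mulr_sumr -mulr_suml sum_ind mul1r.
  by rewrite hb mu_affine mu_one.
apply: (le_trans (W1_le cp)); rewrite le_eqVlt; apply/orP; left; apply/eqP.
transitivity (\sum_x \sum_y (t * (p1 x y * d x y) + (1 - t) * ((x == u)%:R * ((y == v)%:R * d x y)))).
  by apply: eq_bigr => x _; apply: eq_bigr => y _; rewrite /p; ring.
rewrite (eq_bigr (fun x => t * \sum_y p1 x y * d x y +
   (1 - t) * ((x == u)%:R * \sum_y (y == v)%:R * d x y))); last first.
  by move=> x _; rewrite big_split /= -!mulr_sumr.
rewrite big_split /= -!mulr_sumr.
rewrite (sum_delta (fun x => \sum_y (y == v)%:R * d x y)) sum_delta.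
by [].
Qed.

Lemma f_mono a b u v : u != v -> 0 <= a -> a <= b -> b < 1 ->
  kappa_alpha H w a u v / (1 - a) <= kappa_alpha H w b u v / (1 - b).
Proof.
move=> uv a0 ab b1.
have a1 : a < 1 by exact: le_lt_trans ab b1.
have ha : 0 < 1 - a by rewrite subr_gt0.
have hb : 0 < 1 - b by rewrite subr_gt0.
have Dp := hdist_gt0 uv.
have hY := W1_mono_aux (inG_l uv) (inG_r uv) a0 ab b1.
rewrite /kappa_alpha.
move: hY.
set X := W1 _ _ (mu a u) _; set Y := W1 _ _ (mu b u) _; set D := d u v in Dp *.
move=> hY.
have h1 : Y * (1 - a) <= (1 - b) * X + (b - a) * D.
  have := ler_wpM2r (ltW ha) hY.
  have -> : ((1 - b) / (1 - a) * X + (1 - (1 - b) / (1 - a)) * D) * (1 - a)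
     = (1 - b) * X + (b - a) * D by field; rewrite gt_eqF.
  by [].
have key : 0 <= (D - Y) * (1 - a) - (D - X) * (1 - b) by lra.
rewrite -subr_ge0.
have -> : (1 - Y / D) / (1 - b) - (1 - X / D) / (1 - a) =
  ((D - Y) * (1 - a) - (D - X) * (1 - b)) / (D * (1 - a) * (1 - b)).
  by field; rewrite ?gt_eqF.
by apply: divr_ge0 => //; rewrite ltW // !mulr_gt0.
Qed.

Lemma kappa_cvg u v : u != v ->
  cvg ((fun a => kappa_alpha H w a u v / (1 - a)) @ at_left (1 : R))%classic.
Proof.
move=> uv; apply: nondecreasing_at_left_is_cvgr.
- apply: (filterS _ (nbhs_left_gt (@ltr01 R))) => x x0.
  move=> y z; rewrite !in_itv /= => /andP[xy y1] /andP[xz z1] yz.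
  apply: f_mono => //; exact: le_trans (ltW x0) (ltW xy).
- apply: (filterS _ (nbhs_left_gt (@ltr01 R))) => x x0.
  exists (2 * maxw H w / d u v) => _ [y yI <-]; move: yI => /=.
  rewrite in_itv /= => /andP[xy y1].
  apply: kappa_le => //; rewrite y1 andbT; exact: le_trans (ltW x0) (ltW xy).
Qed.

Lemma LLY_le u v : u != v -> LLY_curvature H w u v <= 2 * maxw H w / d u v.
Proof.
move=> uv; rewrite /LLY_curvature; apply: limr_le; first exact: kappa_cvg.
near=> a.
apply: kappa_le => //; apply/andP; split.
  by near: a; apply: nbhs_left_ge; exact: ltr01.
by near: a; exact: nbhs_left_lt.
Unshelve. all: by end_near.
Qed.

Lemma lim_comb (f g h : R -> R) (D D1 D2 : R) :
  cvg (f @ at_left (1 : R))%classic -> cvg (g @ at_left (1 : R))%classic ->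
  cvg (h @ at_left (1 : R))%classic ->
  (\forall a \near at_left (1 : R), D1 * g a + D2 * h a <= D * f a)%classic ->
  D1 * lim (g @ at_left (1 : R))%classic + D2 * lim (h @ at_left (1 : R))%classic
    <= D * lim (f @ at_left (1 : R))%classic.
Proof.
move=> cf cg ch hle.
have e1 : lim ((fun a => D * f a) @ at_left (1 : R))%classic = D * lim (f @ at_left (1 : R))%classic.
  by apply: (cvg_lim (@Rhausdorff R)); apply: cvgMr.
have e2 : lim ((fun a => D1 * g a + D2 * h a) @ at_left (1 : R))%classic =
    D1 * lim (g @ at_left (1 : R))%classic + D2 * lim (h @ at_left (1 : R))%classic.
  apply: (cvg_lim (@Rhausdorff R)).
  by apply: (@cvgD _ _ _ _ _ (fun a => D1 * g a) (fun a => D2 * h a)); apply: cvgMr.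
rewrite -e1 -e2; apply: ler_lim => //.
- apply/cvg_ex; exists (D1 * lim (g @ at_left (1 : R))%classic + D2 * lim (h @ at_left (1 : R))%classic).
  by apply: (@cvgD _ _ _ _ _ (fun a => D1 * g a) (fun a => D2 * h a)); apply: cvgMr.
- by apply/cvg_ex; exists (D * lim (f @ at_left (1 : R))%classic); apply: cvgMr.
Qed.

Lemma step_kappa k u v x : u != v -> u != x -> x != v ->
  d u v = d u x + d x v -> k <= LLY_curvature H w u x -> k <= LLY_curvature H w x v ->
  k <= LLY_curvature H w u v.
Proof.
move=> uv ux xv dsum k1 k2.
have D0 := hdist_gt0 uv; have D1p := hdist_gt0 ux; have D2p := hdist_gt0 xv.
have gu := inG_l uv; have gv := inG_r uv; have gx := inG_l xv.
have := @lim_comb (fun a => kappa_alpha H w a u v / (1 - a))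
  (fun a => kappa_alpha H w a u x / (1 - a)) (fun a => kappa_alpha H w a x v / (1 - a))
  (d u v) (d u x) (d x v) (kappa_cvg uv) (kappa_cvg ux) (kappa_cvg xv).
move=> L.
have hle : (\forall a \near at_left (1:R),
   d u x * (kappa_alpha H w a u x / (1 - a)) + d x v * (kappa_alpha H w a x v / (1 - a))
     <= d u v * (kappa_alpha H w a u v / (1 - a)))%classic.
  near=> a.
  have a0 : 0 <= a by near: a; apply: nbhs_left_ge; exact: ltr01.
  have a1 : a < 1 by near: a; exact: nbhs_left_lt.
  have a01 : 0 <= a <= 1 by rewrite a0 ltW.
  have ha : 0 < 1 - a by rewrite subr_gt0.
  have T := W1_tri (ex_coupling a01 gu gx) (ex_coupling a01 gx gv).
  rewrite /kappa_alpha -subr_ge0.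
  move: T; set Wuv := W1 _ _ (mu a u) (mu a v); set Wux := W1 _ _ (mu a u) (mu a x);
    set Wxv := W1 _ _ (mu a x) (mu a v).
  move=> T.
  have -> : d u v * ((1 - Wuv / d u v) / (1 - a)) - (d u x * ((1 - Wux / d u x) / (1 - a))
     + d x v * ((1 - Wxv / d x v) / (1 - a))) = (Wux + Wxv - Wuv) / (1 - a).
    rewrite dsum; field.
    by rewrite !gt_eqF // addr_gt0.
  by apply: divr_ge0; [rewrite subr_ge0 | exact: ltW].
have {}L := L hle.
have {}L : d u x * LLY_curvature H w u x + d x v * LLY_curvature H w x v
   <= d u v * LLY_curvature H w u v := L.
have e : d u v * k = d u x * k + d x v * k by rewrite dsum mulrDl.
have l1 : d u x * k <= d u x * LLY_curvature H w u x by rewrite ler_wpM2l // ltW.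
have l2 : d x v * k <= d x v * LLY_curvature H w x v by rewrite ler_wpM2l // ltW.
have : d u v * k <= d u v * LLY_curvature H w u v by lra.
by rewrite ler_pM2l.
Unshelve. all: by end_near.
Qed.

Lemma kappa_all k : 0 < k ->
  (forall u v, well_transported H w u v -> k <= LLY_curvature H w u v) ->
  forall u v, u != v -> k <= LLY_curvature H w u v.
Proof.
move=> k0 hk u0 v.
suff: forall (n : nat) (u : V), (#|[set y | (d y v < d u v)%R]| <= n)%N -> u != v -> k <= LLY_curvature H w u v.
  by move=> /(_ _ u0 (leqnn _)).
elim=> [|n IH] u hn uv; have [x [h [hH uh xh ux [dux duv]]]] := decomp uv.
- case: (eqVneq x v) => [xv|xv].
    subst x; apply: hk; split => //; exists h => //; split => //.
  have xin : x \in [set y | d y v < d u v].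
    by rewrite inE duv dux ltrDr w_pos.
  move: hn; rewrite leqn0 cards_eq0 => /eqP A0; by rewrite A0 inE in xin.
- case: (eqVneq x v) => [xv|xv].
    subst x; apply: hk; split => //; exists h => //; split => //.
  have xlt : d x v < d u v by rewrite duv dux ltrDr w_pos.
  apply: (step_kappa uv ux xv) => //.
    by apply: hk; split => //; exists h.
  apply: IH xv.
  rewrite -ltnS; apply: leq_trans hn; apply: proper_card; apply/properP; split.
    by apply/fintype.subsetP => y; rewrite !inE => hy; exact: lt_trans hy xlt.
  by exists x; rewrite !inE ?ltxx.
Qed.

Lemma main_sec :
  (forall u v : V, u != v -> 0 < LLY_curvature H w u v ->
     hdist H w u v <= 2 * maxw H w / LLY_curvature H w u v) /\
  (forall k : R, 0 < k ->
     (forall u v : V, well_transported H w u v -> k <= LLY_curvature H w u v) ->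
     hdiam H w <= 2 * maxw H w / k).
Proof.
have M0 : 0 <= maxw H w.
  rewrite /maxw; apply: (big_ind (fun x => 0 <= x)) => //.
    by move=> x y x0 y0; rewrite le_max x0.
  by move=> h hH; exact: ltW (w_pos hH).
have P1 : forall u v, u != v -> 0 < LLY_curvature H w u v ->
     d u v <= 2 * maxw H w / LLY_curvature H w u v.
  move=> u v uv kp; have Dp := hdist_gt0 uv; have := LLY_le uv.
  by rewrite !ler_pdivlMr // mulrC.
split => // k k0 hk.
have B0 : 0 <= 2 * maxw H w / k by apply: divr_ge0; [exact: mulr_ge0 | exact: ltW].
rewrite /hdiam; apply: bigmax_le => // u _; apply: bigmax_le => // v _.
case: (eqVneq u v) => [->|uv]; first by rewrite hdist_xx.
have kk := kappa_all k0 hk uv.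
have kp : 0 < LLY_curvature H w u v by exact: lt_le_trans k0 kk.
apply: le_trans (P1 _ _ uv kp) _.
apply: ler_wpM2l; first exact: mulr_ge0.
by rewrite lef_pV2 ?posrE.
Qed.

End Proofs.

Unset Implicit Arguments.

Theorem mainTheorem4 (R : realType) (V : finType) (H : {set {set V}})
    (w : {set V} -> R)
    (w_pos : forall h, h \in H -> 0 < w h)
    (H_size : forall h, h \in H -> (2 <= #|h|)%N)
    (H_conn : hconnected H) :
  (forall u v : V, u != v -> 0 < LLY_curvature H w u v ->
     hdist H w u v <= 2 * maxw H w / LLY_curvature H w u v) /\
  (forall k : R, 0 < k ->
     (forall u v : V, well_transported H w u v -> k <= LLY_curvature H w u v) ->
     hdiam H w <= 2 * maxw H w / k).
Proof. by apply: main_sec. Qed.
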